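(* Let $f:\mathbb{R}^n\to\mathbb{R}^m$ be an asymptotically affine function. For any $\epsilon>0$ there exist a compact set $K\subset\mathbb{R}^n$ and a function $F:\mathbb{R}^n\to\mathbb{R}^m$ such that: (1) $F$ is the feedforward function of a radial neural network whose hidden widths are $(n+1,n+2,\dots,n+N)$, i.e. whose widths vector is $(n,n+1,\dots,n+N,m)$, where $N=N(f,K,\epsilon)$; (2) $|F(x)-f(x)|<\epsilon$ for every $x\in\mathbb{R}^n$.
   Context: For $c\in\mathbb{R}^n$ and $r>0$, $B_r(c)=\{x\in\mathbb{R}^n: |x-c|<r\}$. An affine map $\mathbb{R}^n\to\mathbb{R}^m$ is one of the form $x\mapsto Ax+b$. A continuous $f:\mathbb{R}^n\to\mathbb{R}^m$ is asymptotically affine if there is an affine map $L:\mathbb{R}^n\to\mathbb{R}^m$ such that for every $\epsilon>0$ there is a compact $K\subset\mathbb{R}^n$ with $|L(x)-f(x)|<\epsilon$ for all $x\in\mathbb{R}^n\setminus K$. For a compact $K\subset\mathbb{R}^n$, a continuous $f$ defined on $K$ (or on $\mathbb{R}^n$, in which case one uses its restriction to $K$) and $\epsilon>0$, $N(f,K,\epsilon)$ denotes the minimal $N$ such that there exist $c_1,\dots,c_N\in K$ and $r_1,\dots,r_N\in(0,1)$ with $K\subseteq\bigcup_i B_{r_i}(c_i)$ and $f(B_{r_i}(c_i)\cap K)\subseteq B_\epsilon(f(c_i))$ for all $i$. For a function $h:\mathbb{R}\to\mathbb{R}$ and $n\ge1$, $h^{(n)}:\mathbb{R}^n\to\mathbb{R}^n$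 is $h^{(n)}(v)=h(|v|)\,v/|v|$ for $v\neq0$ and $h^{(n)}(0)=0$; a radial rescaling function on $\mathbb{R}^n$ is a map of the form $h^{(n)}$ with $h$ piecewise differentiable. A radial neural network with widths vector $(n_0,\dots,n_L)$ consists of weights $W_i\in\mathbb{R}^{n_i\times n_{i-1}}$, biases $b_i\in\mathbb{R}^{n_i}$ and radial rescaling functions $\rho_i:\mathbb{R}^{n_i}\to\mathbb{R}^{n_i}$, $i=1,\dots,L$; its hidden widths are $(n_1,\dots,n_{L-1})$. Its feedforward function is $F=F_L$ where $F_0=\mathrm{id}_{\mathbb{R}^{n_0}}$ and $F_i(x)=\rho_i(W_iF_{i-1}(x)+b_i)$. *)

(* Defs.v *)
From HB Require Import structures.
From mathcomp Require Import all_boot all_order all_algebra.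
From mathcomp Require Import all_classical all_reals all_analysis.
Set Implicit Arguments. Unset Strict Implicit. Unset Printing Implicit Defensive.
Import Order.TTheory GRing.Theory Num.Theory.
Import numFieldNormedType.Exports.
Local Open Scope classical_set_scope.
Local Open Scope ring_scope.

Section Defs.
Variable R : realType.

Definition enorm (n : nat) (v : 'cV[R]_n) : R :=
  Num.sqrt (\sum_(i < n) v i 0 ^+ 2).

Definition eball (n : nat) (c : 'cV[R]_n) (r : R) : set 'cV[R]_n :=
  [set x | enorm (x - c) < r].

Definition affine_map (n m : nat) (L : 'cV[R]_n -> 'cV[R]_m) : Prop :=
  exists (A : 'M[R]_(m, n)) (b : 'cV[R]_m), forall x, L x = A *m x + b.

Definition asymptotically_affine (n m : nat) (f : 'cV[R]_n -> 'cV[R]_m) : Prop :=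
  continuous f /\
  exists L : 'cV[R]_n -> 'cV[R]_m, affine_map L /\
    forall eps : R, 0 < eps -> exists K : set 'cV[R]_n, compact K /\
      forall x, ~ K x -> enorm (L x - f x) < eps.

Definition good_cover (n m : nat) (f : 'cV[R]_n -> 'cV[R]_m)
  (K : set 'cV[R]_n) (eps : R) (N : nat) : Prop :=
  exists (c : 'I_N -> 'cV[R]_n) (r : 'I_N -> R),
    (forall i, K (c i) /\ 0 < r i < 1) /\
    (forall x, K x -> exists i, eball (c i) (r i) x) /\
    (forall i x, K x -> eball (c i) (r i) x -> eball (f (c i)) eps (f x)).

Definition is_Ncover (n m : nat) (f : 'cV[R]_n -> 'cV[R]_m)
  (K : set 'cV[R]_n) (eps : R) (N : nat) : Prop :=
  good_cover f K eps N /\ forall M, good_cover f K eps M -> (N <= M)%N.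

Definition piecewise_differentiable (h : R -> R) : Prop :=
  exists s : seq R, forall t, t \notin s -> derivable h t 1.

Definition radial (n : nat) (h : R -> R) (v : 'cV[R]_n) : 'cV[R]_n :=
  if v == 0 then 0 else (h (enorm v) / enorm v) *: v.

Inductive radnet : nat -> nat -> Type :=
| RNil (n : nat) : radnet n n
| RCons (n k m : nat) (W : 'M[R]_(k, n)) (b : 'cV[R]_k) (h : R -> R)
    (rest : radnet k m) : radnet n m.

Fixpoint widths (n m : nat) (N : radnet n m) : seq nat :=
  match N with
  | RNil n => [:: n]
  | @RCons n _ _ _ _ _ rest => n :: widths rest
  end.

Fixpoint radnet_ok (n m : nat) (N : radnet n m) : Prop :=
  match N with
  | RNil _ => True
  | RCons _ _ _ _ _ h rest => piecewise_differentiable h /\ radnet_ok rest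
  end.

Fixpoint feedforward (n m : nat) (N : radnet n m) : 'cV[R]_n -> 'cV[R]_m :=
  match N in radnet n m return 'cV[R]_n -> 'cV[R]_m with
  | RNil _ => fun x => x
  | RCons _ _ _ W b h rest => fun x => feedforward rest (radial h (W *m x + b))
  end.

End Defs.

(* Main.v *)
Require Import Defs.
From HB Require Import structures.
From mathcomp Require Import all_boot all_order all_algebra.
From mathcomp Require Import all_classical all_reals all_analysis.
Set Implicit Arguments. Unset Strict Implicit. Unset Printing Implicit Defensive.
Import Order.TTheory GRing.Theory Num.Theory.
Import numFieldNormedType.Exports.
Local Open Scope classical_set_scope.
Local Open Scope ring_scope.

From mathcomp Require Import ring lra.
From mathcomp Require Import zify.


Section S.
Variable R : realType.

Lemma trmx_cont (n : nat) : continuous (@trmx R 1 n).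
Proof.
move=> /= M s /= /(nbhs_ballP (M^T)) [e e0 es].
apply/nbhs_ballP; exists e => //= N [_ MN]; apply: es; split => // i j.
rewrite !mxE; exact: MN.
Qed.

Lemma boxK_compact (n : nat) (rho : R) :
  compact [set x : 'cV[R]_n | forall i, `|x i 0| <= rho].
Proof.
have -> : [set x : 'cV[R]_n | forall i, `|x i 0| <= rho] =
   (@trmx R 1 n) @` [set v : 'rV[R]_n | forall i, `[-rho, rho]%classic (v ord0 i)].
  apply/seteqP; split => x /=.
    move=> Hx; exists x^T; last by rewrite trmxK.
    move=> i; rewrite mxE /= in_itv /= -ler_norml; exact: Hx.
  move=> [v Hv <-] i; rewrite mxE ler_norml; have := Hv i; rewrite /= in_itv /=.
  by rewrite (ord1 0).
apply: (continuous_compact (f := @trmx R 1 n)); first exact/continuous_subspaceT/trmx_cont.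
apply: (@rV_compact _ _ (fun=> `[-rho, rho]%classic)) => i; exact: segment_compact.
Qed.
End S.
Section S.
Variable R : realType.

Lemma enorm_coord d (v : 'cV[R]_d) i : `|v i 0| <= enorm v.
Proof.
rewrite /enorm -sqrtr_sqr ler_sqrt ?sumr_ge0 // => [|j _]; last exact: sqr_ge0.
by rewrite (bigD1 i) //= lerDl sumr_ge0 // => j _; exact: sqr_ge0.
Qed.

Lemma enorm_ge0 d (v : 'cV[R]_d) : 0 <= enorm v.
Proof. exact: sqrtr_ge0. Qed.

Lemma enorm_small d (v : 'cV[R]_d) e : 0 < e ->
  (forall i, `|v i 0| < e / (d%:R + 1)) -> enorm v < e.
Proof.
move=> e0 H; set t := e / (d%:R + 1).
have d1 : 0 < d%:R + 1 :> R by rewrite ltr_wpDl.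
have t0 : 0 < t by rewrite divr_gt0.
have et : e = t * (d%:R + 1) by rewrite /t divfK // gt_eqF.
rewrite /enorm -(ger0_norm (ltW e0)) -sqrtr_sqr ltr_sqrt ?exprn_gt0 //.
apply: (le_lt_trans (y := \sum_(i < d) t ^+ 2)).
  apply: ler_sum => i _; rewrite -real_normK ?num_real //.
  by rewrite lerXn2r // ?nnegrE ?ltW //; exact: H.
rewrite sumr_const card_ord et.
have dg : 0 <= d%:R :> R by [].
rewrite -mulr_natr; nra.
Qed.

Lemma enormN d (v : 'cV[R]_d) : enorm (- v) = enorm v.
Proof. by rewrite /enorm; congr Num.sqrt; apply: eq_bigr => i _; rewrite mxE sqrrN. Qed.

Lemma enorm_gt0 d (v : 'cV[R]_d) : v != 0 -> 0 < enorm v.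
Proof.
move=> vn0; rewrite lt_neqAle enorm_ge0 andbT eq_sym; apply/negP.
rewrite /enorm sqrtr_eq0 => H; move/negP: vn0; apply; apply/eqP/matrixP => i j.
rewrite (ord1 j) mxE; apply/eqP; rewrite -sqrf_eq0 eq_le sqr_ge0 andbT.
apply: le_trans H; rewrite (bigD1 i) //= lerDl sumr_ge0 // => k _; exact: sqr_ge0.
Qed.
End S.
Section S3.
Variable R : realType.

Lemma cont_enorm n m (f : 'cV[R]_n -> 'cV[R]_m) (c : 'cV[R]_n) eps :
  continuous f -> 0 < eps -> exists r, 0 < r < 1 /\
    forall x, enorm (x - c) < r -> enorm (f x - f c) < eps.
Proof.
move=> hf e0.
have m1 : 0 < m%:R + 1 :> R by rewrite ltr_wpDl.
have : nbhs (f c) (ball (f c) (eps / (m%:R + 1))) by apply: nbhsx_ballx; rewrite divr_gt0.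
move=> /(hf c) /nbhs_ballP [d d0 Hd].
have {}d0 : 0 < d by []. have d1 : 0 < 1 + d by lra.
exists (d / (1 + d)); split.
  rewrite divr_gt0 //= ltr_pdivrMr //; lra.
move=> x Hx.
have : ball c d x.
  split => // i j; rewrite (ord1 j) /ball /=.
  rewrite -normrN opprB; have := enorm_coord (x - c) i; rewrite !mxE => h; apply: le_lt_trans h _.
  apply: (lt_trans Hx); rewrite ltr_pdivrMr //; nra.
move=> /Hd [_ Hb]; apply: enorm_small => // i.
have := Hb i 0; rewrite /ball /= -normrN opprB !mxE.
done.
Qed.
End S3.
Section S4.
Variable R : realType.

Lemma good_cover_ex n m (f : 'cV[R]_n -> 'cV[R]_m) (K : set 'cV[R]_n) eps :
  continuous f -> compact K -> 0 < eps -> exists N, good_cover f K eps N.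
Proof.
move=> hf cK e0.
have /choice [rf Hrf] : forall c : 'cV[R]_n, exists r, 0 < r < 1 /\
    forall x, enorm (x - c) < r -> enorm (f x - f c) < eps.
  move=> c; exact: cont_enorm.
have n1 : 0 < n%:R + 1 :> R by rewrite ltr_wpDl.
have rpos c : 0 < rf c / (n%:R + 1).
  by have [/andP[h _] _] := Hrf c; rewrite divr_gt0.
move: cK; rewrite compact_cover => /(_ _ K (fun c => ball c (rf c / (n%:R + 1)))).
case.
- move=> i _; exact: ball_open.
- move=> x Kx; exists x => //; exact: ballxx.
move=> D' D'K Hcov.
set s := finmap.enum_fset D'.
exists (size s), (fun i => nth 0 s i), (fun i => rf (nth 0 s i)); split; [|split].
- move=> i; split; last by have [] := Hrf (nth 0 s i).
  have := @D'K (nth 0 s i) (mem_nth 0 (ltn_ord i)).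
  by rewrite inE.
- move=> x /Hcov [p /= pD Hp].
  have ps : p \in s by [].
  have pi : (index p s < size s)%N by rewrite index_mem.
  exists (Ordinal pi); rewrite /eball /= nth_index //.
  apply: enorm_small; first by have [/andP[]] := Hrf p.
  move=> i; move: Hp => [_ /(_ i 0)]; rewrite /ball /= !mxE -normrN opprB.
  done.
- move=> i x Kx; rewrite /eball /= => /(proj2 (Hrf _)).
  by rewrite -enormN opprB.
Qed.
End S4.
Section S5.
Variable R : realType.

Definition amat d e (T : 'cV[R]_d -> 'cV[R]_e) : 'M[R]_(e, d) :=
  \matrix_(i, j) (T (delta_mx j 0) - T 0) i 0.

Lemma amatE d e (T : 'cV[R]_d -> 'cV[R]_e) :
  (forall a u v, T (a *: u + v) = a *: (T u - T 0) + T v) ->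
  forall y, amat T *m y + T 0 = T y.
Proof.
move=> HT y.
pose Lf u := T u - T 0.
have LfD u v : Lf (u + v) = Lf u + Lf v.
  by rewrite /Lf -[u]scale1r HT !scale1r addrA.
have LfZ a u : Lf (a *: u) = a *: Lf u.
  by rewrite /Lf -[a *: u]addr0 HT addrK.
have Lf0 : Lf 0 = 0 by rewrite /Lf subrr.
have ysum : y = \sum_(j < d) y j 0 *: delta_mx j 0.
  rewrite {1}(matrix_sum_delta y).
  by apply: eq_bigr => j _; rewrite big_ord1.
have : Lf y = \sum_(j < d) y j 0 *: Lf (delta_mx j 0).
  rewrite {1}ysum; elim/big_rec2: _ => [|j s1 s2 _ <-]; first exact: Lf0.
  by rewrite LfD LfZ.
rewrite /Lf => /eqP; rewrite subr_eq => /eqP ->; congr (_ + _).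
apply/matrixP => i k; rewrite (ord1 k) !mxE summxE; apply: eq_bigr => j _.
by rewrite !mxE mulrC.
Qed.
End S5.
Section Net.
Variable R : realType.

Definition get d (y : 'cV[R]_d) (i : nat) : R := oapp (fun o : 'I_d => y o 0) 0 (insub i).

Lemma getE d (y : 'cV[R]_d) (i : 'I_d) : get y i = y i 0.
Proof. by rewrite /get valK. Qed.

Lemma get_out d (y : 'cV[R]_d) i : (d <= i)%N -> get y i = 0.
Proof. by move=> h; rewrite /get insubF // ltnNge h. Qed.

Definition cvec d (g : nat -> R) : 'cV[R]_d := \col_(i < d) g i.

Lemma get_cvec d g i : (i < d)%N -> get (cvec d g) i = g i.
Proof. by move=> h; rewrite /get insubT /= mxE. Qed.

Lemma get_lin d a (u v : 'cV[R]_d) : get (a *: u + v) = fun j => a * get u j + get v j.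
Proof.
apply: funext => j; rewrite /get; case: insubP => [w _ _ | _] /=; first by rewrite !mxE.
by rewrite mulr0 addr0.
Qed.

Lemma get0 d : get (0 : 'cV[R]_d) = fun _ => 0.
Proof. by apply: funext => j; rewrite /get; case: insubP => [w _ _ | _] //=; rewrite mxE. Qed.

Variables (n m N : nat) (c : 'I_N -> 'cV[R]_n) (r : 'I_N -> R).
Variables (A : 'M[R]_(m, n)) (b : 'cV[R]_m) (f : 'cV[R]_n -> 'cV[R]_m) (rho : R).

Definition center (k : nat) : 'cV[R]_n :=
  match k with 0 => 0 | S j => oapp c 0 (insub j) end.
Definition rad (k : nat) : R :=
  match k with 0 => 0 | S j => oapp r 0 (insub j) end.
Definition active (k : nat) : bool := [forall i, `|center k i 0| < rho - 1].

Definition pre (k : nat) (g : nat -> R) (i : nat) : R :=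
  let al := if k == 0 then 1 else g n in
  if (i < n)%N then g i + get (center k) i - get (center k.+1) i
  else if i == n then al
  else if (i < n + k)%N then g i
  else 2 - 2 * al.

Definition st (k : nat) (xt : 'cV[R]_n) (cls : nat) (i : nat) : R :=
  if (i < n)%N then get xt i - get (center k) i
  else if i == n then (if cls == 0 then 1 else 0)
  else if (cls != 0) && (cls <= i - n)%N then 2 else 0.

Lemma pre_st k xt cls i : (cls <= k)%N -> (k == 0 -> cls == 0) ->
  pre k (st k xt cls) i = st k.+1 xt cls i.
Proof.
move=> ck k0; rewrite /pre /st.
have [hin|hin] := ltnP i n; first by rewrite addrNK.
rewrite ltnn eqxx.
case: eqP => [_|hn].
  by case: eqP => [k0'|//]; rewrite (eqP (k0 (introT eqP k0'))).
have [hk|hk] := ltnP i (n + k); first by [].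
case: (eqVneq k 0) => [k0'|k1].
  by move: (k0 (introT eqP k0')) => /eqP -> /=; lra.

have -> : (cls <= i - n)%N by lia.
by case: (cls == 0) => /=; lra.
Qed.

Lemma pre_ext k g1 g2 i : (forall j, (j < n + k)%N -> g1 j = g2 j) ->
  pre k g1 i = pre k g2 i.
Proof.
move=> H; rewrite /pre.
case: ifP => h1; first by rewrite H //; lia.
case: ifP => h2.
  by case: eqVneq => [//|k0]; rewrite H //; lia.
case: ifP => h3; first by rewrite H.
by case: eqVneq => [//|k0]; rewrite H //; lia.
Qed.

Lemma pre_aff k a g1 g2 i :
  pre k (fun j => a * g1 j + g2 j) i =
  a * (pre k g1 i - pre k (fun _ => 0) i) + pre k g2 i.
Proof.
rewrite /pre; case: (k == 0); case: ifP => _; try ring.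
  by case: ifP => _; [ring | case: ifP => _; ring].
by case: ifP => _; [ring | case: ifP => _; ring].
Qed.

Definition preF d k (y : 'cV[R]_d) : 'cV[R]_(d.+1) := cvec d.+1 (pre k (get y)).

Lemma preF_aff d k a (u v : 'cV[R]_d) :
  preF k (a *: u + v) = a *: (preF k u - preF k 0) + preF k v.
Proof.
apply/matrixP => i j; rewrite !mxE get_lin get0 pre_aff; done.
Qed.

Definition hk (k : nat) (t : R) : R :=
  if active k && (t < Num.sqrt (rad k ^+ 2 + 1)) then 0 else t.

Lemma radial_hk d k (v : 'cV[R]_d) : radial (hk k) v =
  if active k && (enorm v < Num.sqrt (rad k ^+ 2 + 1)) then 0 else v.
Proof.
rewrite /radial /hk; case: eqVneq => [->|v0]; first by case: ifP.
have e0 := enorm_gt0 v0.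
case: ifP => _; first by rewrite mul0r scale0r.
by rewrite divff ?gt_eqF // scale1r.
Qed.

Lemma radial_id d (v : 'cV[R]_d) : radial (fun t => t) v = v.
Proof.
rewrite /radial; case: eqVneq => [->//|v0].
by rewrite divff ?gt_eqF ?enorm_gt0 // scale1r.
Qed.

Lemma pd_thr (act : bool) (T : R) :
  piecewise_differentiable (fun t : R => if act && (t < T) then 0 else t).
Proof.
exists [:: T] => t; rewrite inE => tT.
case: act => /=; last first.
  apply: (near_eq_derivable (f := id)); last exact: derivable_id.
  by near=> s.
case: (ltgtP t T) => [tlt|tgt|teq]; last by rewrite teq eqxx in tT.
  apply: (near_eq_derivable (f := cst 0)); last exact: derivable_cst.
  near=> s; rewrite ifT //; near: s; exact: lt_nbhsl.
apply: (near_eq_derivable (f := id)); last exact: derivable_id.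
near=> s; rewrite ifF //; apply/negbTE; rewrite -leNgt; apply/ltW; near: s.
exact: lt_nbhsr.
Unshelve. all: by end_near.
Qed.

Definition mm (P : nat -> R) (j : nat) : R := if j == 0 then 0 else P (n + j)%N.
Definition Dv (j : 'I_N) : 'cV[R]_m := f (c j) - A *m c j - b.
Definition Dm : 'M[R]_(m, N) := \matrix_(i, j) Dv j i 0.
Definition wP (P : nat -> R) (j : nat) : R := (mm P j.+1 - mm P j) / 2.
Definition outP (P : nat -> R) : 'cV[R]_m :=
  A *m cvec n P + Dm *m cvec N (wP P) + b.
Definition outF d (y : 'cV[R]_d) : 'cV[R]_m := outP (pre N (get y)).

Lemma outF_aff d a (u v : 'cV[R]_d) :
  outF (a *: u + v) = a *: (outF u - outF (0 : 'cV[R]_d)) + outF v.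
Proof.
rewrite /outF get_lin get0.
set P1 := pre N (get u); set P2 := pre N (get v); set P0 := pre N (fun _ => 0).
have -> : pre N (fun j => a * get u j + get v j) = fun i => a * (P1 i - P0 i) + P2 i.
  by apply: funext => i; rewrite pre_aff.
have E1 : cvec n (fun i => a * (P1 i - P0 i) + P2 i) =
    a *: (cvec n P1 - cvec n P0) + cvec n P2.
  by apply/matrixP => i j; rewrite !mxE.
have E2 : cvec N (wP (fun i => a * (P1 i - P0 i) + P2 i)) =
    a *: (cvec N (wP P1) - cvec N (wP P0)) + cvec N (wP P2).
  apply/matrixP => i j; rewrite !mxE /wP /mm /=.
  by case: (i == 0 :> nat) => /=; ring.
rewrite /outP E1 E2 !mulmxDr -!scalemxAr !mulmxBr.
by apply/matrixP => i j; rewrite !mxE; ring.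
Qed.

Fixpoint build (rem d k : nat) : radnet R d m :=
  match rem with
  | 0 => @RCons R d m m (amat (@outF d)) (outF (0 : 'cV[R]_d)) (fun t => t) (@RNil R m)
  | r'.+1 => @RCons R d d.+1 m (amat (@preF d k)) (preF k (0 : 'cV[R]_d)) (hk k.+1)
               (build r' d.+1 k.+1)
  end.

Lemma widths_build rem d k : widths (build rem d k) = d :: rcons (iota d.+1 rem) m.
Proof. by elim: rem d k => [//|r' IH] d k /=; rewrite IH. Qed.

Lemma ok_build rem d k : radnet_ok (build rem d k).
Proof.
elim: rem d k => [|r' IH] d k /=; split => //; first exact: (pd_thr false 0).
exact: pd_thr.
Qed.

Fixpoint clsf (x : 'cV[R]_n) (k : nat) : nat :=
  match k with
  | 0 => 0
  | k'.+1 => if clsf x k' != 0 then clsf x k'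
             else if active k'.+1 && (enorm (x - center k'.+1) < rad k'.+1) then k'.+1 else 0
  end.
Definition xtf x k := if clsf x k == 0 then x else center (clsf x k).

Lemma clsf_le x k : (clsf x k <= k)%N.
Proof.
elim: k => [//|k IH] /=; case: ifP => _; first exact: leqW.
by case: ifP.
Qed.

Lemma rad_bnd (Hr : forall i, 0 < r i < 1) k : 0 <= rad k < 1.
Proof.
case: k => [|j] /=; first lra.
case: insubP => [w _ _ | _] /=; last lra.
by have /andP[h1 h2] := Hr w; rewrite h2 ltW.
Qed.

Lemma sum_st0 k xt : \sum_(i < (n + k).+1) (st k.+1 xt 0 i) ^+ 2 =
   \sum_(i < n) ((xt - center k.+1) i 0) ^+ 2 + 1.
Proof.
rewrite -(big_mkord xpredT (fun i => st k.+1 xt 0 i ^+ 2)).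
rewrite (big_cat_nat (n := n)) //=; last by rewrite leqW // leq_addr.
rewrite big_mkord; congr (_ + _).
  by apply: eq_bigr => i _; rewrite /st ltn_ord !getE !mxE.
rewrite big_ltn; last by rewrite ltnS leq_addr.
rewrite {1}/st ltnn eqxx /= expr1n.
rewrite big_nat_cond big1 ?addr0 // => i /andP[/andP[h1 h2] _].
rewrite /st; have -> : (i < n)%N = false by lia.
have -> : (i == n) = false by lia.
by rewrite /= expr0n.
Qed.

Lemma enorm_st0 k (u : 'cV[R]_((n + k).+1)) xt :
  (forall i, (i < (n + k).+1)%N -> get u i = st k.+1 xt 0 i) ->
  enorm u = Num.sqrt (enorm (xt - center k.+1) ^+ 2 + 1).
Proof.
move=> H; rewrite /enorm sqr_sqrtr; last by apply: sumr_ge0 => i _; exact: sqr_ge0.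
rewrite -sum_st0; congr Num.sqrt; apply: eq_bigr => i _.
by rewrite -H // getE.
Qed.

Lemma enorm_stc k (u : 'cV[R]_((n + k).+1)) xt cls :
  (forall i, (i < (n + k).+1)%N -> get u i = st k.+1 xt cls i) ->
  cls != 0 -> (cls <= k)%N -> 2 <= enorm u.
Proof.
move=> H c0 ck.
have hi : (n + cls < (n + k).+1)%N by lia.
have := enorm_coord u (Ordinal hi); rewrite -getE H //= /st.
have -> : (n + cls < n)%N = false by lia.
have -> : (n + cls == n) = false by lia.
rewrite c0 addKn leqnn /=.
by rewrite ger0_norm //.
Qed.

Lemma get0' d i : get (0 : 'cV[R]_d) i = 0.
Proof. by rewrite get0. Qed.

Lemma ff_build (Hr : forall i, 0 < r i < 1) x rem : forall d k (y : 'cV[R]_d),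
  d = (n + k)%N -> (k + rem)%N = N ->
  (forall i, (i < d)%N -> get y i = st k (xtf x k) (clsf x k) i) ->
  feedforward (build rem d k) y = outP (st N.+1 (xtf x N) (clsf x N)).
Proof.
elim: rem => [|r' IH] d k y hd hkN Hy.
  rewrite addn0 in hkN; subst k d => /=.
  rewrite radial_id amatE; last exact: outF_aff.
  rewrite /outF; congr outP; apply: funext => i.
  rewrite (@pre_ext _ _ (st N (xtf x N) (clsf x N)) i); last by move=> j hj; rewrite Hy.
  apply: pre_st; first exact: clsf_le.
  by move/eqP => N0; move: (clsf_le x N); rewrite N0 leqn0.
subst d => /=.
rewrite amatE; last exact: preF_aff.
set u := preF k y.
have Hu : forall i, (i < (n + k).+1)%N ->
    get u i = st k.+1 (xtf x k) (clsf x k) i.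
  move=> i hi; rewrite /u /preF get_cvec //.
  rewrite (@pre_ext _ _ (st k (xtf x k) (clsf x k)) i); last by move=> j hj; rewrite Hy.
  apply: pre_st; first exact: clsf_le.
  by move/eqP => k0; move: (clsf_le x k); rewrite k0 leqn0.
have E1 : (n + k).+1 = (n + k.+1)%N by rewrite addnS.
have E2 : (k.+1 + r')%N = N by rewrite addSnnS.
apply: (IH _ _ _ E1 E2).
move=> i hi; rewrite radial_hk.
have /andP[r0 r1] := rad_bnd Hr k.+1.
have Rlt2 : Num.sqrt (rad k.+1 ^+ 2 + 1) < 2.
  have -> : 2 = Num.sqrt (2 ^+ 2) :> R by rewrite sqrtr_sqr ger0_norm.
  rewrite ltr_sqrt ?exprn_gt0 //; nra.
have clsfS : clsf x k.+1 = if clsf x k != 0 then clsf x k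
    else if active k.+1 && (enorm (x - center k.+1) < rad k.+1) then k.+1 else 0 by [].
rewrite /xtf clsfS; move: Hu; rewrite /xtf.
case: (eqVneq (clsf x k) 0) => [c0|c0] Hu /=.
  rewrite c0 /= in Hu.
  have Eu := enorm_st0 Hu.
  have -> : (enorm u < Num.sqrt (rad k.+1 ^+ 2 + 1)) = (enorm (x - center k.+1) < rad k.+1).
    rewrite Eu ltr_sqrt; last by have := sqr_ge0 (rad k.+1); lra.
    by rewrite ltrD2r ltr_sqr ?nnegrE ?enorm_ge0.
  case: ifP => _ /=; last by rewrite Hu.
  rewrite get0' /st subrr; case: ifP => // _; case: ifP => // _.
  by have -> : (k.+1 <= i - n)%N = false by lia.
have cge := enorm_stc Hu c0 (clsf_le x k).
have -> : (enorm u < Num.sqrt (rad k.+1 ^+ 2 + 1)) = false.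
  by apply/negbTE; rewrite -leNgt; apply/ltW/(lt_le_trans Rlt2).
by rewrite andbF (negbTE c0) Hu.
Qed.

Lemma centerN : center N.+1 = 0.
Proof. by rewrite /= insubF // ltnn. Qed.

Lemma cvec_stN xt cls : cvec n (st N.+1 xt cls) = xt.
Proof.
apply/matrixP => i j; rewrite (ord1 j) mxE /st ltn_ord centerN get0' subr0.
exact: getE.
Qed.

Lemma wP_st xt cls j : (j < N)%N -> wP (st N.+1 xt cls) j = if cls == j.+1 then 1 else 0.
Proof.
move=> jN; rewrite /wP /mm /st /=.
have h1 : (n + j.+1 < n)%N = false by lia.
have h2 : (n + j.+1 == n) = false by lia.
rewrite h1 h2 addKn.
case: (eqVneq cls 0) => [->|c0] /=.
  case: eqVneq => [_|j0]; first by rewrite subrr mul0r.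
  rewrite ifF; last by lia.
  by rewrite ifF ?subrr ?mul0r //; lia.
move: h1 h2; case: j jN => [|j] jN h1 h2 /=.
  have [->|cn] := eqVneq cls 1; first by rewrite leqnn; lra.
  have -> : (cls <= 1)%N = false by lia.
  by rewrite subrr mul0r.
have h3 : (n + j.+1 < n)%N = false by lia.
have h4 : (n + j.+1 == n) = false by lia.
rewrite h3 h4 addKn.
case: (ltngtP cls j.+2) => hc.
- by rewrite ifT ?subrr ?mul0r //; lia.
- by rewrite ifF ?subrr ?mul0r //; lia.
- by rewrite ifF ?subr0 ?divff //; lia.
Qed.

Lemma Dm_w xt cls : Dm *m cvec N (wP (st N.+1 xt cls)) =
  \sum_(j < N) (if cls == j.+1 then Dv j else 0).
Proof.
apply/matrixP => i k; rewrite (ord1 k) !mxE summxE.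
apply: eq_bigr => j _.
rewrite !mxE wP_st //; case: ifP => _; first by rewrite mulr1 /Dv !mxE.
by rewrite mulr0 mxE.
Qed.

Lemma outP_none xt : outP (st N.+1 xt 0) = A *m xt + b.
Proof.
rewrite /outP cvec_stN Dm_w big1 ?addr0 // => j _.
Qed.

Lemma outP_cls xt (o : 'I_N) : outP (st N.+1 xt o.+1) = A *m xt + Dv o + b.
Proof.
rewrite /outP cvec_stN Dm_w (bigD1 o) //= eqxx big1 ?addr0 // => j /negbTE jo.
rewrite eqSS; case: eqP => // /val_inj h.
by rewrite h eqxx in jo.
Qed.

Lemma clsf_none x k : clsf x k = 0 -> forall j, (0 < j <= k)%N ->
  ~~ (active j && (enorm (x - center j) < rad j)).
Proof.
elim: k => [_ j|k IH]; first by lia.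
rewrite /=; case: (eqVneq (clsf x k) 0) => [c0|c0] /=; last by move=> h; rewrite h eqxx in c0.
case: ifP => // hc _ j /andP[j0 jk].
have [->|jne] := eqVneq j k.+1; first by rewrite hc.
by apply: IH => //; lia.
Qed.

Lemma clsf_some x k : clsf x k != 0 ->
  [/\ (0 < clsf x k <= k)%N, active (clsf x k) & enorm (x - center (clsf x k)) < rad (clsf x k)].
Proof.
elim: k => [//|k IH]; rewrite /=.
case: (eqVneq (clsf x k) 0) => [c0|c0] /=.
  case: ifP => // /andP[h1 h2] _; split => //; lia.
by move=> _; have [h1 h2 h3] := IH c0; split => //; lia.
Qed.

End Net.
Lemma mx_coord_le (R : realType) p q (x : 'M[R]_(p, q)) i j : `|x i j| <= `|x|.
Proof. rewrite [leRHS]/Num.Def.normr /= mx_normrE; apply/bigmax_geP; right => /=; exists (i, j) => //. Qed.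
Lemma center_ord (R : realType) n N (c : 'I_N -> 'cV[R]_n) (q : 'I_N) : center c q.+1 = c q.
Proof. by rewrite /= valK. Qed.
Lemma rad_ord (R : realType) N (r : 'I_N -> R) (q : 'I_N) : rad r q.+1 = r q.
Proof. by rewrite /= valK. Qed.

Unset Implicit Arguments.
Theorem theorem1 (R : realType) (n m : nat) (f : 'cV[R]_n -> 'cV[R]_m)
  (hf : asymptotically_affine f) (eps : R) (heps : 0 < eps) :
  exists (K : set 'cV[R]_n) (N : nat) (F : 'cV[R]_n -> 'cV[R]_m),
    compact K /\ is_Ncover f K eps N /\
    (exists net : radnet R n m,
        radnet_ok net /\
        widths net = n :: rcons (iota n.+1 N) m /\
        F = feedforward net) /\
    (forall x, enorm (F x - f x) < eps).
Proof.
move: hf => [hfc [L [[A0 [b0 HL]] Has]]].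
have [K0 [cK0 HK0]] := Has eps heps.
have [M [Mreal HM]] := compact_bounded cK0.
have HB : forall x, K0 x -> `|x| <= M + 1 by move=> x /(HM (M + 1)) -> //; lra.
set rho := M + 4.
set K := [set x : 'cV[R]_n | forall i, `|x i 0| <= rho].
have cK : compact K by exact: boxK_compact.
have exP : exists N, `[< good_cover f K eps N >].
  by have [N0 HN0] := good_cover_ex hfc cK heps; exists N0; apply/asboolP.
case: (ex_minnP exP) => N /asboolP HN Hmin.
have [c [r [Hcr [Hcov Hgood]]]] := HN.
have Hr : forall i, 0 < r i < 1 by move=> i; case: (Hcr i).
exists K, N, (feedforward (build c r A0 b0 f rho N n 0)).
split => //; split.
  by split => // M' HM'; apply: Hmin; apply/asboolP.
split.
  exists (build c r A0 b0 f rho N n 0); split; first exact: ok_build.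
  by rewrite widths_build.
move=> x.
rewrite (ff_build A0 b0 f Hr (x := x) (d := n) (k := 0) (y := x)) ?addn0 //; last first.
  by move=> i hi; rewrite /st hi /= get0' subr0.
rewrite /xtf.
case: (eqVneq (clsf c r rho x N) 0) => [c0|c0].
  rewrite c0 /= outP_none -HL; apply: HK0 => K0x.
  have hx := HB x K0x.
  have Kx : K x.
    by move=> i; apply: (le_trans (mx_coord_le x i 0)); rewrite /rho; lra.
  have [q Ho] := Hcov x Kx.
  have := clsf_none c0 (j := q.+1); rewrite center_ord rad_ord.
  move=> /(_ (ltn_ord q)); rewrite Ho andbT.
  move/forallPn => [l]; rewrite -leNgt => hl.
  have h1 : `|x l 0 - c q l 0| < 1.
    have := enorm_coord (x - c q) l; rewrite !mxE => h.
    by apply: (le_lt_trans h); apply: (lt_trans Ho); case/andP: (Hr q).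
  have h2 := mx_coord_le x l 0.
  have h3 : `|c q l 0| <= `|x l 0| + `|x l 0 - c q l 0|.
    have {1}-> : c q l 0 = x l 0 + - (x l 0 - c q l 0) by ring.
    by rewrite (le_trans (ler_normD _ _)) // normrN.
  rewrite /rho center_ord in hl; lra.
have [/andP[j0 jN] act Hin] := clsf_some c0.
have ho : ((clsf c r rho x N).-1 < N)%N by lia.
have E : clsf c r rho x N = (Ordinal ho).+1 by rewrite /= prednK.
move: act Hin; rewrite E center_ord rad_ord => act Hin.
rewrite outP_cls.
set q := Ordinal ho in act Hin *.
have Kx : K x.
  move=> l; move/forallP: act => /(_ l) hl.
  have h1 : `|x l 0 - c q l 0| < 1.
    have := enorm_coord (x - c q) l; rewrite !mxE => h.
    by apply: (le_lt_trans h); apply: (lt_trans Hin); case/andP: (Hr q).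
  have h3 : `|x l 0| <= `|c q l 0| + `|x l 0 - c q l 0|.
    have {1}-> : x l 0 = c q l 0 + (x l 0 - c q l 0) by ring.
    exact: ler_normD.
  rewrite /rho center_ord in hl *; lra.
have := Hgood q x Kx Hin; rewrite /eball /= -enormN opprB.
have -> : A0 *m c q + Dv c A0 b0 f q + b0 = f (c q).
  by apply/matrixP => i k; rewrite /Dv !mxE; ring.
done.
Qed.
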